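(* Let $k\ge 2$, let $V=\{(i_1,\ldots,i_{k-1}) : 1\le i_j\le k \text{ for all } j\}$, and for $j=1,\ldots,k-1$ let $\mathcal{H}_j$ be the $k$-uniform hypergraph on $V$ whose edges are the $k$-element sets $\{v^1,\ldots,v^k\}\subseteq V$ with $\{v^1_j,\ldots,v^k_j\}=\{1,\ldots,k\}$ (the $j$-th coordinates are pairwise distinct). Then each $\mathcal{H}_j$ admits a polychromatic $k$-coloring, and the chromatic number of $\bigcup_{j=1}^{k-1}\mathcal{H}_j$ equals $k$ (in particular it has no proper $(k-1)$-coloring).
   Context: A $k$-coloring of a hypergraph is a map from its vertex set to $\{1,\ldots,k\}$; it is polychromatic if every edge contains vertices of all $k$ colors, and proper if every edge with at least two vertices contains two vertices of different colors. The chromatic number is the smallest $k$ admitting a proper $k$-coloring. The union of hypergraphs on a common vertex set has as edge set the union of their edge sets. *)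

(* Defs.v *)
From mathcomp Require Import all_boot.
Set Implicit Arguments. Unset Strict Implicit. Unset Printing Implicit Defensive.

Definition hypergraph (T : finType) := {set {set T}}.

(* A c-coloring is a map T -> 'I_c (colors {1..c} encoded as {0..c-1}). *)
Definition polychromatic (T : finType) (c : nat) (H : hypergraph T) (f : T -> 'I_c) : Prop :=
  forall e, e \in H -> forall col : 'I_c, exists2 v, v \in e & f v = col.

Definition proper_coloring (T : finType) (c : nat) (H : hypergraph T) (f : T -> 'I_c) : Prop :=
  forall e, e \in H -> 1 < #|e| -> exists u, exists2 v, (u \in e) && (v \in e) & f u != f v.

Definition chromatic_number_eq (T : finType) (H : hypergraph T) (n : nat) : Prop :=
  (exists f : T -> 'I_n, proper_coloring H f) /\
  (forall m, m < n -> ~ exists f : T -> 'I_m, proper_coloring H f).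

Definition hunion (T : finType) (I : finType) (P : pred I) (H : I -> hypergraph T) : hypergraph T :=
  \bigcup_(i | P i) H i.

Definition Vk (k : nat) := {ffun 'I_(k.-1) -> 'I_k}.

Definition Hj (k : nat) (j : 'I_(k.-1)) : hypergraph (Vk k) :=
  [set e : {set Vk k} | (#|e| == k) && (#|[set (v : Vk k) j | v in e]| == k)].

(* Main.v *)
Require Import Defs.
From mathcomp Require Import all_boot.
Set Implicit Arguments. Unset Strict Implicit. Unset Printing Implicit Defensive.

Section S.
Variable k' : nat.
Local Notation k := k'.+2.

Definition colr (v : Vk k) : 'I_k := odflt ord0 [pick x | x \notin codom v].

Lemma colrP v : colr v \notin codom v.
Proof.
rewrite /colr; case: pickP => [x /= -> //|/= H]; exfalso.
have h1 : #|codom v| <= k'.+1.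
  by rewrite (leq_trans (card_size _)) // size_codom card_ord.
have h2 : k <= #|codom v|.
  rewrite -{1}(card_ord k); apply: subset_leq_card; apply/subsetP => x _.
  by move: (H x); rewrite /= => /negbFE.
by move: (leq_trans h2 h1); rewrite ltnn.
Qed.

Lemma imfull (j : 'I_(k'.+1)) (e : {set Vk k}) : e \in @Hj k j ->
  [set (v : Vk k) j | v in e] = setT.
Proof.
rewrite /Hj inE => /andP [_ /eqP hc]; apply/eqP.
rewrite eqEcard; apply/andP; split; first exact: subsetT.
by rewrite cardsT card_ord hc.
Qed.

Lemma part1 : chromatic_number_eq (hunion predT (@Hj k)) k.
Proof.
split.
  exists colr => e /bigcupP [j _ he] hcard.
  case: (boolP [exists u in e, exists v in e, colr u != colr v]).
    move=> /existsP [u /andP [hu /existsP [v /andP [hv hne]]]].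
    by exists u; exists v; rewrite ?hu ?hv.
  move=> /negP hn; exfalso.
  have [u0 hu0] : exists u0, u0 \in e.
    have : 0 < #|e| by apply: leq_trans hcard.
    by rewrite card_gt0 => /set0Pn.
  have : colr u0 \in [set (v : Vk k) j | v in e] by rewrite imfull.
  move=> /imsetP [v hv hvj].
  have hcv : colr v = colr u0.
    apply/eqP; apply/negPn/negP => hne; apply: hn.
    by apply/existsP; exists v; rewrite hv /=; apply/existsP; exists u0; rewrite hu0.
  move: (colrP v); rewrite hcv hvj.
  by rewrite codom_f.
move=> m hm [f hf].
case: m hm f hf => [|m'] hm f hf.
  by case: (f [ffun => ord0]).
case: (boolP [exists c : 'I_m'.+1, exists j : 'I_(k'.+1),
    [forall x : 'I_k, exists v, (f v == c) && (v j == x)]]).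
  move=> /existsP [c /existsP [j /forallP H]].
  pose g x := odflt [ffun => ord0] [pick v | (f v == c) && (v j == x)].
  have gP x : f (g x) = c /\ g x j = x.
    rewrite /g; case: pickP => [v /andP [/eqP -> /eqP ->] //|/= hN].
    by move: (H x) => /existsP [v]; rewrite hN.
  have ginj : injective g.
    by move=> x y hxy; rewrite -(gP x).2 -(gP y).2 hxy.
  pose e := g @: [set: 'I_k].
  have he : e \in hunion predT (@Hj k).
    apply/bigcupP; exists j => //; rewrite /Hj inE.
    rewrite card_imset // cardsT card_ord eqxx /=.
    have -> : [set (v : Vk k) j | v in e] = setT.
      apply/setP => x; rewrite inE; apply/imsetP; exists (g x).
        by apply/imsetP; exists x.
      by rewrite (gP x).2.
    by rewrite cardsT card_ord.
  have hc : 1 < #|e| by rewrite card_imset // cardsT card_ord.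
  move: (hf e he hc) => [u [v /andP [/imsetP [x _ ->] /imsetP [y _ ->]]]].
  by rewrite (gP x).1 (gP y).1 eqxx.
move=> hN.
pose a c j := odflt ord0 [pick x : 'I_k | [forall v : Vk k, ~~ ((f v == c) && (v j == x))]].
have aP c j v : f v = c -> v j != a c j.
  move=> hv; rewrite /a; case: pickP => [x /forallP /(_ v)|/= hP].
    by rewrite hv eqxx.
  exfalso; move/negP: hN; apply; apply/existsP; exists c; apply/existsP; exists j.
  apply/forallP => x; move: (hP x) => /negbT /forallPn [v' /negbNE hv'].
  by apply/existsP; exists v'.
pose w : Vk k := [ffun j : 'I_(k'.+1) => a (inord j) j].
pose c := f w.
have hc : (c < k'.+1)%N by apply: leq_trans (ltn_ord c) _; rewrite -ltnS.
pose j0 := Ordinal hc.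
move: (aP c j0 w erefl); rewrite /w ffunE.
have -> : inord j0 = c by apply: val_inj; rewrite /= inordK.
by rewrite eqxx.
Qed.

End S.

Theorem mainTheorem2 (k : nat) (hk : 2 <= k) :
  (forall j : 'I_(k.-1), exists f : Vk k -> 'I_k, polychromatic (Hj j) f) /\
  chromatic_number_eq (hunion predT (@Hj k)) k.
Proof.
case: k hk => [|[|k']] // _; split; last exact: part1.
move=> j; exists (fun v => v j) => e he col.
have : col \in [set (v : Vk k'.+2) j | v in e] by rewrite imfull.
by move=> /imsetP [v hv ->]; exists v.
Qed.
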